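(* Every $3$-dimensional Acaa-algebra over a field $\mathbb K$ of characteristic $0$ is isomorphic to one of the following: (1) the $3$-dimensional abelian algebra (all brackets zero); (2) the $3$-dimensional Heisenberg algebra $\mathfrak h_3$, given in a basis $\{e_1,e_2,e_3\}$ by $[e_1,e_2]=e_3$ and all other brackets of basis vectors (not determined by anticommutativity) zero.
   Context: An Acaa-algebra over a field $\mathbb K$ of characteristic $0$ is a $\mathbb K$-vector space $A$ with a bilinear product $[\cdot,\cdot]$ which is anticommutative, $[x,y]=-[y,x]$, and satisfies $[x_1,[x_2,x_3]]=[x_2,[x_3,x_1]]$ for all $x_1,x_2,x_3\in A$. Isomorphism means a linear bijection preserving the bracket. *)

(* Defs.v *)
From HB Require Import structures.
From mathcomp Require Import all_boot all_order all_algebra.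
Set Implicit Arguments. Unset Strict Implicit. Unset Printing Implicit Defensive.
Import GRing.Theory.
Local Open Scope ring_scope.

Definition bilinear_bracket (K : fieldType) (V : lmodType K) (br : V -> V -> V) :=
  (forall a x y z, br (a *: x + y) z = a *: br x z + br y z) /\
  (forall a x y z, br x (a *: y + z) = a *: br x y + br x z).

Definition acaa (K : fieldType) (V : lmodType K) (br : V -> V -> V) :=
  bilinear_bracket br /\
  (forall x y, br x y = - br y x) /\
  (forall x1 x2 x3, br x1 (br x2 x3) = br x2 (br x3 x1)).

Definition alg_iso (K : fieldType) (V W : lmodType K)
  (brV : V -> V -> V) (brW : W -> W -> W) :=
  exists f : V -> W,
    [/\ (forall a x y, f (a *: x + y) = a *: f x + f y),
        bijective f &
        forall x y, f (brV x y) = brW (f x) (f y)].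

(* The model algebras on K^3 = 'rV[K]_3 with standard basis e_1, e_2, e_3
   (indices 0, 1, 2). *)
Definition abelian3_br (K : fieldType) (x y : 'rV[K]_3) : 'rV[K]_3 := 0.

(* Heisenberg algebra h_3: [e1,e2] = e3, other basis brackets zero;
   bilinear extension: [x,y] = (x1 y2 - x2 y1) e3. *)
Definition heis3_br (K : fieldType) (x y : 'rV[K]_3) : 'rV[K]_3 :=
  (x 0 ord0 * y 0 (inord 1) - x 0 (inord 1) * y 0 ord0) *: delta_mx 0 (inord 2).

(* Main.v *)
Require Import Defs.
From HB Require Import structures.
From mathcomp Require Import all_boot all_order all_algebra.
Import GRing.Theory.
Local Open Scope ring_scope.

Lemma two_neq0 (K : fieldType) (charK0 : [pchar K] =i pred0) : (2%:R : K) != 0.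
Proof. by move: (charK0 2%N); rewrite !inE /= => /negbT. Qed.

Lemma opp_self0 (K : fieldType) (charK0 : [pchar K] =i pred0) (V : lmodType K)
  (v : V) : v = - v -> v = 0.
Proof.
move=> h; have : (2%:R : K) *: v = 0 by rewrite scaler_nat mulr2n {1}h addNr.
by move/eqP; rewrite scaler_eq0 (negbTE (@two_neq0 K charK0)) => /eqP.
Qed.

Section B.
Variables (K : fieldType) (V : lmodType K) (br : V -> V -> V) (hA : acaa br).

Lemma br0l z : br 0 z = 0.
Proof.
case: hA => [[hl _] _]; have := hl 1 0 0 z; rewrite !scale1r addr0.
by move=> h; have := congr1 (fun t => t - br 0 z) h; rewrite /= addrK subrr.
Qed.
Lemma br0r z : br z 0 = 0.
Proof.
case: hA => [[_ hr] _]; have := hr 1 z 0 0; rewrite !scale1r addr0.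
by move=> h; have := congr1 (fun t => t - br z 0) h; rewrite /= addrK subrr.
Qed.
Lemma brDl x y z : br (x + y) z = br x z + br y z.
Proof. by case: hA => [[hl _] _]; have := hl 1 x y z; rewrite !scale1r. Qed.
Lemma brDr x y z : br z (x + y) = br z x + br z y.
Proof. by case: hA => [[_ hr] _]; have := hr 1 z x y; rewrite !scale1r. Qed.
Lemma brZl a x z : br (a *: x) z = a *: br x z.
Proof. by case: hA => [[hl _] _]; have := hl a x 0 z; rewrite !addr0 br0l addr0. Qed.
Lemma brZr a x z : br z (a *: x) = a *: br z x.
Proof. by case: hA => [[_ hr] _]; have := hr a z x 0; rewrite !addr0 br0r addr0. Qed.
Lemma brNl x z : br (- x) z = - br x z.
Proof. by rewrite -scaleN1r brZl scaleN1r. Qed.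
Lemma brNr x z : br z (- x) = - br z x.
Proof. by rewrite -scaleN1r brZr scaleN1r. Qed.
Lemma brC x y : br x y = - br y x.
Proof. by case: hA => [_ [h _]]. Qed.
Lemma brH x y z : br x (br y z) = br y (br z x).
Proof. by case: hA => [_ [_ h]]. Qed.

Definition Q a b c d := br (br a b) (br c d).
Lemma QP a b c d : Q a b c d = Q b d c a.
Proof. by rewrite /Q brH (brH d) (brH c) (brH a). Qed.
Lemma Qs1 a b c d : Q a b c d = - Q b a c d.
Proof. by rewrite /Q (brC a) brNl. Qed.
Lemma Qs2 a b c d : Q a b c d = - Q a b d c.
Proof. by rewrite /Q (brC c) brNr. Qed.
Lemma Qs3 a b c d : Q a b c d = - Q c d a b.
Proof. by rewrite /Q brC. Qed.
Lemma Qneg a b c d : Q a b c d = - Q a b c d.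
Proof.
rewrite {1}Qs3 QP Qs1 opprK Qs3 QP Qs2 opprK Qs3.
done.
Qed.
End B.

Section F.
Variables (K : fieldType) (V : vectType K).

Lemma free_of_indep (e0 e1 e2 : V) :
  (forall a b c, a *: e0 + b *: e1 + c *: e2 = 0 -> [/\ a = 0, b = 0 & c = 0]) ->
  free [:: e0; e1; e2].
Proof.
move=> h; rewrite !free_cons /free span_nil dimv0 andbT span_seq1 span_cons span_seq1.
apply/and3P; split.
- apply/negP => /memv_addP [u /vlineP [k ->] [v /vlineP [l ->] he]].
  have := h 1 (- k) (- l); rewrite scale1r he !scaleNr [k *: e1 + _]addrC addrK subrr.
  by case=> // /eqP; rewrite oner_eq0.
- apply/negP => /vlineP [k he].
  have := h 0 1 (- k); rewrite scale0r add0r scale1r he scaleNr subrr.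
  by case=> // _ /eqP; rewrite oner_eq0.
- rewrite memv0; apply/negP => /eqP he.
  have := h 0 0 1; rewrite !scale0r !add0r scale1r he.
  by case=> // _ _ /eqP; rewrite oner_eq0.
Qed.

Lemma indep_of_free (e0 e1 e2 : V) : free [:: e0; e1; e2] ->
  forall a b c, a *: e0 + b *: e1 + c *: e2 = 0 -> [/\ a = 0, b = 0 & c = 0].
Proof.
rewrite !free_cons span_cons !span_seq1 span_nil memv0 => /and4P [h0 h1 h2 _] a b c he.
have ha : a = 0.
  apply/eqP; apply/negP => /negP ha; move/negP: h0; apply.
  have -> : e0 = a^-1 *: (- (b *: e1) - c *: e2).
    apply: (scalerI ha); rewrite scalerA divff // scale1r.
    rewrite -opprD; apply/eqP; rewrite -addr_eq0 addrA he //.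
  by rewrite memvZ // memv_add // memvN memvZ // memv_line.
rewrite ha scale0r add0r in he.
have hb : b = 0.
  apply/eqP; apply/negP => /negP hb; move/negP: h1; apply.
  have -> : e1 = b^-1 *: (- (c *: e2)).
    apply: (scalerI hb); rewrite scalerA divff // scale1r.
    by move/eqP: he; rewrite addr_eq0 => /eqP.
  by rewrite memvZ // memvN memvZ // memv_line.
rewrite hb scale0r add0r in he; split => //.
by move/eqP: he; rewrite scaler_eq0 (negbTE h2) orbF => /eqP.
Qed.

Lemma span3 (e0 e1 e2 : V) : free [:: e0; e1; e2] -> \dim (fullv : {vspace V}) = 3%N ->
  forall v, exists a b c, v = a *: e0 + b *: e1 + c *: e2.
Proof.
move=> hf hd v.
have hs : <<[:: e0; e1; e2]>>%VS = fullv.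
  apply/eqP; rewrite eqEdim subvf /= hd.
  by move: hf; rewrite /free => /eqP ->.
have := memvf v; rewrite -hs span_cons span_cons span_seq1.
move=> /memv_addP [u /vlineP [a ->] [w /memv_addP [u' /vlineP [b ->] [w' /vlineP [c ->] ->]] ->]].
by exists a, b, c; rewrite addrA.
Qed.
End F.

Lemma ord3 (j : 'I_3) : j = ord0 \/ j = inord 1 \/ j = inord 2.
Proof.
case: j => -[|[|[|m]]] Hm.
- by left; apply/val_inj.
- by right; left; apply/val_inj; rewrite /= inordK.
- by right; right; apply/val_inj; rewrite /= inordK.
- by [].
Qed.

Lemma i01 : ((ord0 : 'I_3) == inord 1) = false. Proof. by rewrite -val_eqE /= !inordK. Qed.
Lemma i02 : ((ord0 : 'I_3) == inord 2) = false. Proof. by rewrite -val_eqE /= !inordK. Qed.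
Lemma i12 : ((inord 1 : 'I_3) == inord 2) = false. Proof. by rewrite -val_eqE /= !inordK. Qed.
Lemma i10 : ((inord 1 : 'I_3) == ord0) = false. Proof. by rewrite eq_sym i01. Qed.
Lemma i20 : ((inord 2 : 'I_3) == ord0) = false. Proof. by rewrite eq_sym i02. Qed.
Lemma i21 : ((inord 2 : 'I_3) == inord 1) = false. Proof. by rewrite eq_sym i12. Qed.
Definition iE := (i01, i02, i12, i10, i20, i21, eqxx).

Definition gmap {K : fieldType} {V : lmodType K} (e0 e1 e2 : V) (r : 'rV[K]_3) : V :=
  r 0 ord0 *: e0 + r 0 (inord 1) *: e1 + r 0 (inord 2) *: e2.

Lemma add3ACA (U : zmodType) (A B C D E F : U) :
  A + B + (C + D) + (E + F) = (A + C + E) + (B + D + F).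
Proof. by rewrite [A + B + _]addrACA [_ + (E + F)]addrACA. Qed.

Lemma gmap_lin (K : fieldType) (V : lmodType K) (e0 e1 e2 : V) a r s :
  gmap e0 e1 e2 (a *: r + s) = a *: gmap e0 e1 e2 r + gmap e0 e1 e2 s.
Proof.
rewrite /gmap !mxE !scalerDl -!scalerA add3ACA !scalerDr //.
Qed.

Lemma iso3 (K : fieldType) (V : vectType K) (br : V -> V -> V) (e0 e1 e2 : V)
  (hf : free [:: e0; e1; e2]) (hd : \dim (fullv : {vspace V}) = 3%N)
  (B : 'rV[K]_3 -> 'rV[K]_3 -> 'rV[K]_3)
  (hB : forall r s, br (gmap e0 e1 e2 r) (gmap e0 e1 e2 s) = gmap e0 e1 e2 (B r s)) :
  alg_iso br B.
Proof.
set g := gmap e0 e1 e2.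
have ginj : injective g.
  move=> r s hrs.
  have : g ((-1) *: s + r) = 0 by rewrite /g gmap_lin -/g hrs scaleN1r addNr.
  rewrite /g /gmap !mxE => /(@indep_of_free _ _ _ _ _ hf) [h0 h1 h2].
  apply/matrixP => i j; rewrite (ord1 i).
  have e : forall j, (-1) * s 0 j + r 0 j = 0 -> r 0 j = s 0 j.
    by move=> k /eqP; rewrite mulN1r addrC subr_eq0 => /eqP.
  by case: (ord3 j) => [->|[->|->]]; apply: e.
have gsurj : forall v, exists r, g r == v.
  move=> v; have [a [b [c ->]]] := @span3 _ _ _ _ _ hf hd v.
  exists (a *: delta_mx 0 ord0 + b *: delta_mx 0 (inord 1) + c *: delta_mx 0 (inord 2)).
  by rewrite /g /gmap !mxE !iE /= !mulr1 !mulr0 !addr0 !add0r.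
pose f v := xchoose (gsurj v).
have fK : forall v, g (f v) = v by move=> v; apply/eqP; exact: (xchooseP (gsurj v)).
exists f; split.
- by move=> a x y; apply: ginj; rewrite /g gmap_lin -/g !fK.
- by exists g => // r; apply: ginj; rewrite fK.
- by move=> x y; apply: ginj; rewrite /g -hB -/g !fK.
Qed.
From Stdlib Require Import Classical.
Import GRing.Theory.
Local Open Scope ring_scope.

Arguments br0l {K V br} hA z.
Arguments br0r {K V br} hA z.
Arguments brDl {K V br} hA x y z.
Arguments brDr {K V br} hA x y z.
Arguments brZl {K V br} hA a x z.
Arguments brZr {K V br} hA a x z.
Arguments brNl {K V br} hA x z.
Arguments brNr {K V br} hA x z.
Arguments brC {K V br} hA x y.
Arguments brH {K V br} hA x y z.
Arguments Qneg {K V br} hA a b c d.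
Arguments opp_self0 {K} charK0 {V} v.
Arguments indep_of_free {K V e0 e1 e2}.
Arguments free_of_indep {K V e0 e1 e2}.
Arguments span3 {K V e0 e1 e2}.

Section M.
Variables (K : fieldType) (charK0 : [pchar K] =i pred0) (V : vectType K)
  (dimV : \dim (fullv : {vspace V}) = 3%N) (br : V -> V -> V) (hA : acaa br).

Lemma brxx x : br x x = 0.
Proof. by apply: (opp_self0 charK0); rewrite {1}(brC hA). Qed.

Lemma Q0 a b c d : br (br a b) (br c d) = 0.
Proof. by apply: (opp_self0 charK0); have := Qneg hA a b c d; rewrite /Q. Qed.

Lemma Tyyz y z : br y (br y z) = 0.
Proof. by apply: (opp_self0 charK0); rewrite {1}(brH hA) (brC hA z) (brNr hA). Qed.

Lemma Tzyz y z : br z (br y z) = 0.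
Proof. by rewrite (brH hA) brxx (br0r hA). Qed.

Lemma central x y z u : br u (br x (br y z)) = 0.
Proof. by rewrite (brH hA) (brH hA) Q0. Qed.

Lemma expand x y z a b c :
  let v := a *: x + b *: y + c *: z in let w := br x (br y z) in
  [/\ br v (br y z) = a *: w, br v (br z x) = b *: w & br v (br x y) = c *: w].
Proof.
move=> v w; rewrite /v !(brDl hA) !(brZl hA).
rewrite !Tyyz !Tzyz !scaler0 ?addr0 ?add0r; split => //.
- by rewrite /w (brH hA x).
- by rewrite /w (brH hA x) (brH hA y).
Qed.

Lemma T0 x y z : br x (br y z) = 0.
Proof.
set w := br x (br y z).
have [//|wn0] := eqVneq w 0.
have cw : forall u, br w u = 0 by move=> u; rewrite (brC hA) central oppr0.
have hi : forall a b c, a *: x + b *: y + c *: z = 0 -> [/\ a = 0, b = 0 & c = 0].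
  move=> a b c he; have [e1 e2 e3] := expand x y z a b c.
  rewrite he !(br0l hA) in e1 e2 e3.
  move/esym/eqP: e1; rewrite scaler_eq0 (negbTE wn0) orbF => /eqP ->.
  move/esym/eqP: e2; rewrite scaler_eq0 (negbTE wn0) orbF => /eqP ->.
  by move/esym/eqP: e3; rewrite scaler_eq0 (negbTE wn0) orbF => /eqP ->.
have [a [b [c hw]]] := span3 (free_of_indep hi) dimV w.
have [e1 e2 e3] := expand x y z a b c.
rewrite -hw !cw -/w in e1 e2 e3.
have ha : a = 0 by move/esym/eqP: e1; rewrite scaler_eq0 (negbTE wn0) orbF => /eqP.
have hb : b = 0 by move/esym/eqP: e2; rewrite scaler_eq0 (negbTE wn0) orbF => /eqP.
have hc : c = 0 by move/esym/eqP: e3; rewrite scaler_eq0 (negbTE wn0) orbF => /eqP.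
by rewrite hw ha hb hc !scale0r !addr0.
Qed.

End M.

Theorem mainTheorem3 (K : fieldType) (charK0 : [pchar K] =i pred0)
  (V : vectType K) (dimV : \dim (fullv : {vspace V}) = 3%N)
  (br : V -> V -> V) (hA : acaa br) :
  alg_iso br (@abelian3_br K) \/ alg_iso br (@heis3_br K).
Proof.
have T := @T0 _ charK0 _ dimV _ hA.
case: (classic (forall x y, br x y = 0)) => [hz | hnz].
- left.
  have hb := basis_free (vbasisP (fullv : {vspace V})).
  have hs : size (vbasis (fullv : {vspace V})) = 3%N by rewrite size_tuple dimV.
  move: hb hs; case: (tval (vbasis fullv)) => [|e0 [|e1 [|e2 [|? ?]]]] //= hf _.
  apply: (@iso3 _ _ br _ _ _ hf dimV) => r s; rewrite hz /abelian3_br /gmap !mxE.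
  by rewrite !scale0r !addr0.
- right.
  have [p [q hpq]] : exists p q, br p q != 0.
    apply: NNPP => hn; apply: hnz => x y; apply/eqP; apply/negPn/negP => h.
    by apply: hn; exists x, y.
  set c := br p q in hpq.
  have hpp := @brxx _ charK0 _ _ hA p; have hqq := @brxx _ charK0 _ _ hA q.
  have hcc := @brxx _ charK0 _ _ hA c.
  have hqp : br q p = - c by rewrite (brC hA).
  have huc : forall u, br u c = 0 by move=> u; apply: T.
  have hcu : forall u, br c u = 0 by move=> u; rewrite (brC hA) huc oppr0.
  have hf : free [:: p; q; c].
    apply: free_of_indep => a b g he.
    have e1 : br (a *: p + b *: q + g *: c) q = a *: c.
      by rewrite !(brDl hA) !(brZl hA) hqq hcu !scaler0 !addr0.
    have e2 : br (a *: p + b *: q + g *: c) p = - (b *: c).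
      by rewrite !(brDl hA) !(brZl hA) hpp hqp hcu !scaler0 addr0 add0r scalerN.
    rewrite he in e1 e2; rewrite (br0l hA) in e1; rewrite (br0l hA) in e2.
    have ha : a = 0 by move/esym/eqP: e1; rewrite scaler_eq0 (negbTE hpq) orbF => /eqP.
    have hb : b = 0.
      by move/esym/eqP: e2; rewrite oppr_eq0 scaler_eq0 (negbTE hpq) orbF => /eqP.
    split => //; move: he; rewrite ha hb !scale0r !add0r => /eqP.
    by rewrite scaler_eq0 (negbTE hpq) orbF => /eqP.
  apply: (@iso3 _ _ br _ _ _ hf dimV) => r s; rewrite /heis3_br /gmap !mxE !iE /=.
  rewrite !(brDl hA) !(brZl hA) !(brDr hA) !(brZr hA) hpp hqq hqp !hcu !huc.
  rewrite !scaler0 !addr0 !add0r !mulr0 !scale0r !add0r !mulr1.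
  rewrite -/c scaler0 addr0 !scalerA scalerN -scaleNr -scalerDl.
  by [].
Qed.
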